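(* Let $G$ be a connected graph containing two adjacent vertices $v_0,v_1$ such that the distance in $G$ from $v_0$ to every other vertex of $G$ is less than $\mathrm{diam}(G)$. Let $G'$ be obtained from $G$ by adding new vertices $v_2,v_3,\dots,v_n$ and the edges $v_1v_2, v_2v_3,\dots,v_{n-1}v_n$ and $v_0v_2, v_0v_3,\dots,v_0v_n$. Then $\mathrm{diam}(G')=\mathrm{diam}(G)$.
   Context: $\mathrm{diam}(G)$ denotes the diameter of a connected graph $G$, the maximum distance between two of its vertices. The vertices $v_2,\dots,v_n$ are new vertices not in $G$. *)

(* Defs.v *)
From mathcomp Require Import all_boot all_order.
Set Implicit Arguments. Unset Strict Implicit. Unset Printing Implicit Defensive.

Section Graphs.
Variable T : finType.
Implicit Types (e : rel T) (x y : T).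

Definition simple_graph e := symmetric e /\ irreflexive e.
Definition connected_graph e := forall x y, connect e x y.

Definition walkb e x y (k : nat) : bool :=
  [exists p : k.-tuple T, path e x p && (last x p == y)].

(* graph distance: least length of a walk from x to y (lengths < #|T|
   suffice in a connected graph); defaults to #|T| if unreachable *)
Definition dist e x y : nat :=
  \big[minn/#|T|]_(k < #|T| | walkb e x y k) (k : nat).

Definition diam e : nat := \max_(x : T) \max_(y : T) dist e x y.
End Graphs.

(* G' : vertex set T + 'I_m, where the new vertex k : 'I_m is v_(k+2)
   (so m = n - 1 new vertices v_2, ..., v_n). Edges: those of G,
   v1 v2, v_j v_(j+1) (2 <= j < n), and v0 v_j (2 <= j <= n). *)
Definition ext_adj (T : finType) (e : rel T) (v0 v1 : T) (m : nat)
  (a b : T + 'I_m) : bool :=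
  match a, b with
  | inl x, inl y => e x y
  | inl x, inr k => ((x == v1) && (val k == 0)) || (x == v0)
  | inr k, inl x => ((x == v1) && (val k == 0)) || (x == v0)
  | inr k, inr l => (val l == (val k).+1) || (val k == (val l).+1)
  end.
Arguments ext_adj {T} e v0 v1 m a b.

(* Main.v *)
Require Import Defs.
From mathcomp Require Import all_boot all_order.
Set Implicit Arguments. Unset Strict Implicit. Unset Printing Implicit Defensive.

Section G.
Variable T : finType.
Implicit Types (r : rel T) (x y z : T).

Lemma walkbP r x y k :
  reflect (exists p : seq T, [/\ size p = k, path r x p & last x p = y]) (walkb r x y k).
Proof.
apply: (iffP existsP) => [[p /andP[Hp /eqP Hl]] | [p [Hs Hp Hl]]].
  by exists (val p); rewrite size_tuple.
have Hs' : size p == k by rewrite Hs.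
by exists (Tuple Hs'); rewrite /= Hp Hl eqxx.
Qed.

Lemma walkb0 r x : walkb r x x 0.
Proof. by apply/walkbP; exists [::]. Qed.

Lemma walkb1 r x y : r x y -> walkb r x y 1.
Proof. by move=> h; apply/walkbP; exists [:: y]; rewrite /= h. Qed.

Lemma walkb_cat r x y z a b : walkb r x y a -> walkb r y z b -> walkb r x z (a + b).
Proof.
move=> /walkbP[p [<- Hp Hl]] /walkbP[q [<- Hq Hl2]].
apply/walkbP; exists (p ++ q); rewrite size_cat cat_path last_cat Hl Hp Hq.
by split.
Qed.

Lemma walkb_sym r x y k : symmetric r -> walkb r x y k -> walkb r y x k.
Proof.
move=> sr /walkbP[p [Hs Hp Hl]]; apply/walkbP.
case: p Hs Hp Hl => [|z p] Hs Hp Hl.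
  by exists [::]; rewrite -Hl.
exists (rev (belast x (z :: p))); split.
- by rewrite size_rev size_belast.
- rewrite -Hl rev_path; apply: sub_path Hp => a b /=; by rewrite sr.
- by rewrite /= rev_cons last_rcons.
Qed.

Lemma bigmin_le (I : eqType) (s : seq I) (P : pred I) (F : I -> nat) idx i :
  i \in s -> P i -> \big[minn/idx]_(j <- s | P j) F j <= F i.
Proof.
elim: s => // j s IH; rewrite inE big_cons; case/orP => [/eqP <- Pi | H Pi].
  by rewrite Pi geq_minl.
case: ifP => _; last exact: IH.
by rewrite geq_min IH // orbT.
Qed.

Lemma dist_le r x y k : walkb r x y k -> dist r x y <= k.
Proof.
move=> w; rewrite /dist; case: (ltnP k #|T|) => Hk.
  exact: (bigmin_le _ _ (mem_index_enum (Ordinal Hk)) w).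
apply: leq_trans Hk.
apply: (big_ind (fun d => d <= #|T|)) => //.
  by move=> a b Ha Hb; rewrite geq_min Ha.
by move=> i _; apply: ltnW.
Qed.

Lemma dist_leT r x y : dist r x y <= #|T|.
Proof.
apply: (big_ind (fun d => d <= #|T|)) => //.
  by move=> a b Ha Hb; rewrite geq_min Ha.
by move=> i _; apply: ltnW.
Qed.

Lemma dist_walk r x y : dist r x y < #|T| -> walkb r x y (dist r x y).
Proof.
have : (dist r x y == #|T|) || walkb r x y (dist r x y).
  rewrite /dist.
  apply: (big_ind (fun d => (d == #|T|) || walkb r x y d)) => //.
  - by rewrite eqxx.
  - by move=> a b Ha Hb; rewrite /minn; case: ifP.
  - by move=> i ->; rewrite orbT.
by case/orP => [/eqP -> | //]; rewrite ltnn.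
Qed.

Lemma connect_dist r x y : connect r x y -> dist r x y < #|T|.
Proof.
case/connectP => p Hp ->.
case/shortenP: Hp => p' Hp' Hu _.
apply: (@leq_ltn_trans (size p')).
  by apply: dist_le; apply/walkbP; exists p'.
move/card_uniqP: Hu => /= <-; exact: max_card.
Qed.

Lemma lazy_walk r x p : path (fun a b => (a == b) || r a b) x p ->
  exists2 k, k <= size p & walkb r x (last x p) k.
Proof.
elim: p x => [|z p IH] x /=.
  by move=> _; exists 0 => //; exact: walkb0.
case/andP => /orP[/eqP <- | Hr] /IH [k Hk Hw].
  by exists k => //; apply: leqW.
by exists (1 + k); [rewrite add1n | apply: walkb_cat (walkb1 Hr) Hw].
Qed.

Lemma dist_le_diam r x y : dist r x y <= diam r.
Proof.
rewrite /diam.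
have h1 := @leq_bigmax T (fun x => \max_(y : T) dist r x y) x.
have h2 := @leq_bigmax T (fun y => dist r x y) y.
exact: leq_trans h2 h1.
Qed.
End G.

Section Ext.
Variables (T : finType) (e : rel T) (v0 v1 : T) (m : nat).
Hypothesis sr : symmetric e.
Hypothesis e01 : e v0 v1.
Local Notation E := (ext_adj e v0 v1 m).

Lemma embed x y k : walkb e x y k -> walkb E (inl x) (inl y) k.
Proof.
move=> /walkbP[p [Hs Hp Hl]]; apply/walkbP; exists (map inl p).
by rewrite size_map path_map last_map Hl.
Qed.

Definition projv (a : T + 'I_m) : T := match a with inl z => z | inr _ => v0 end.

Lemma proj x y k : walkb E (inl x) (inl y) k -> dist e x y <= k.
Proof.
move=> /walkbP[p [Hs Hp Hl]].
have Hp' : path (fun a b => (a == b) || e a b) x (map projv p).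
  rewrite (_ : x = projv (inl x)) // path_map.
  apply: sub_path Hp => [[a|i] [b|j]] /=.
  - by move=> ->; rewrite orbT.
  - case/orP => [/andP[/eqP -> _] | ->] //.
    by rewrite sr e01 orbT.
  - case/orP => [/andP[/eqP -> _] | /eqP ->]; first by rewrite e01 orbT.
    by rewrite eqxx.
  - by rewrite eqxx.
case: (lazy_walk Hp') => k' Hk' Hw.
have Hl' : last x (map projv p) = y.
  by rewrite (_ : x = projv (inl x)) // last_map Hl.
rewrite Hl' in Hw.
apply: leq_trans (dist_le Hw) _.
by rewrite -Hs -(size_map projv).
Qed.
End Ext.

Theorem theorem3p3 (T : finType) (e : rel T) (v0 v1 : T) (n : nat) :
  simple_graph e -> connected_graph e -> e v0 v1 ->
  (forall x : T, x != v0 -> dist e v0 x < diam e) ->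
  2 <= n ->
  diam (ext_adj e v0 v1 (n - 1)) = diam e.
Proof.
move=> [sr ir] conn e01 H _.
set E := ext_adj e v0 v1 (n - 1).
have n10 : v1 != v0 by apply/eqP => h; rewrite h ir in e01.
have d2 : 2 <= diam e.
  have := H v1 n10.
  have w := dist_walk (connect_dist (conn v0 v1)).
  case Hd: (dist e v0 v1) w => [|d]; last by move=> _ h; exact: (leq_ltn_trans (ltn0Sn d) h).
  by move=> /walkbP[[|? ?] [//= _ _ h]]; rewrite h eqxx in n10.
have d1 : 1 <= diam e by apply: ltnW.
have Ev0 : forall l, E (inl v0) (inr l) by move=> l; rewrite /E /= eqxx orbT.
have Ev0' : forall l, E (inr l) (inl v0) by move=> l; rewrite /E /= eqxx orbT.
apply/eqP; rewrite eqn_leq; apply/andP; split.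
  apply/bigmax_leqP => a _; apply/bigmax_leqP => b _.
  case: a => [x|k]; case: b => [y|l].
  - apply: leq_trans (dist_le_diam e x y).
    apply: dist_le; apply: embed; apply: dist_walk; exact: connect_dist.
  - case: (eqVneq x v0) => [->|nx].
      apply: leq_trans d1; apply: dist_le; exact: walkb1.
    have w := dist_walk (connect_dist (conn v0 x)).
    have w' := embed v0 v1 (n - 1) (walkb_sym sr w).
    have := walkb_cat w' (walkb1 (Ev0 l)).
    move/dist_le => h; apply: leq_trans h _; rewrite addn1; exact: H x nx.
  - case: (eqVneq y v0) => [->|ny].
      apply: leq_trans d1; apply: dist_le; exact: walkb1.
    have w := dist_walk (connect_dist (conn v0 y)).
    have w' := embed v0 v1 (n - 1) w.
    have := walkb_cat (walkb1 (Ev0' k)) w'.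
    move/dist_le => h; apply: leq_trans h _; rewrite add1n; exact: H y ny.
  - have := walkb_cat (walkb1 (Ev0' k)) (walkb1 (Ev0 l)).
    by move/dist_le => h; apply: leq_trans h _.
apply/bigmax_leqP => x _; apply/bigmax_leqP => y _.
apply: leq_trans (dist_le_diam E (inl x) (inl y)).
case: (ltnP (dist E (inl x) (inl y)) #|{: T + 'I_(n - 1)}|) => h.
  exact: (proj sr e01 (dist_walk h)).
apply: leq_trans (dist_leT e x y) _; apply: leq_trans h.
by rewrite card_sum leq_addr.
Qed.
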